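(* Let $F=(f_1,\dots,f_p)\in\mathbb{C}[X_1,\dots,X_n]^p$ be such that $\langle F\rangle$ is radical and $V(F)\subset\mathbb{C}^n$ is smooth and equidimensional of dimension $\delta=n-p$, and let $i\in\{1,\dots,\delta+1\}$. Suppose $F$ satisfies $\mathbf{H}_i(1)$, $\mathbf{H}_i(2)$, $\mathbf{H}_i(3)$, and that $\bm\sigma=(\sigma_1,\dots,\sigma_{i-1})\in\mathbb{C}^{i-1}$ satisfies $\mathbf{H}'_i$. Then for any $\bm u=(u_1,\dots,u_p)\in\mathbb{C}^p$, $0$ is a regular value of the $n+p$ polynomials \[X_1-\sigma_1,\dots,X_{i-1}-\sigma_{i-1},\ F,\ [L_1\cdots L_p]\cdot\mathrm{jac}(F,i),\ u_1L_1+\dots+u_pL_p-1,\] i.e. at every common zero in $\mathbb{C}^{n+p}$ their Jacobian with respect to $(X_1,\dots,X_n,L_1,\dots,L_p)$ has rank $n+p$.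
   Context: $L_1,\dots,L_p$ are new variables; $\mathrm{jac}(F,i)$ is the $p\times(n-i)$ matrix of partial derivatives $\partial f_k/\partial X_j$, $j=i+1,\dots,n$. $W(i,F)=\{\bm x: F(\bm x)=0,\ \mathrm{rank}(\mathrm{jac}(F,i)(\bm x))<p\}$. $\mathbf{H}_i(1)$: $W(i,F)$ is empty or $(i-1)$-equidimensional. $\mathbf{H}_i(2)$: at every $(\bm x,\bm\ell)$ with $\bm\ell\ne0$ cancelling $F,\ [L_1\cdots L_p]\cdot\mathrm{jac}(F,i)$, their Jacobian with respect to $(X,L)$ has rank $n+p-i$. $\mathbf{H}_i(3)$: $W(i,F)$ is empty or $\mathbb{C}[X_1,\dots,X_{i-1}]\to\mathbb{C}[X_1,\dots,X_n]/I(W(i,F))$ is injective and integral. $\mathbf{H}'_i$: at every common zero $(\bm x,\bm\ell)$ with $\bm\ell\ne0$ of the $n+p-1$ polynomials $X_1-\sigma_1,\dots,X_{i-1}-\sigma_{i-1},F,[L_1\cdots L_p]\cdot\mathrm{jac}(F,i)$, their Jacobian with respect to $(X,L)$ has rank $n+p-1$. *)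

(* Defs.v *)
From mathcomp Require Import all_boot all_algebra.
From mathcomp Require Import Rstruct complex.
From mathcomp Require Export mpoly.
From Stdlib Require Import Reals.

Set Implicit Arguments.
Unset Strict Implicit.
Unset Printing Implicit Defensive.

Import GRing.Theory.
Local Open Scope ring_scope.

Definition C : closedFieldType := (Rdefinitions.R)[i].

Definition point (n : nat) := 'I_n -> C.
Definition cset (n : nat) := point n -> Prop.

Definition in_ideal n p (F : 'I_p -> {mpoly C[n]}) (g : {mpoly C[n]}) : Prop :=
  exists q : 'I_p -> {mpoly C[n]}, g = \sum_(k < p) q k * F k.

Definition radical_ideal n p (F : 'I_p -> {mpoly C[n]}) : Prop :=
  forall (g : {mpoly C[n]}) (e : nat), in_ideal F (g ^+ e) -> in_ideal F g.

Definition zeros n p (F : 'I_p -> {mpoly C[n]}) : cset n :=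
  fun x => forall k : 'I_p, (F k).@[x] = 0.

Definition vanishes_on n (V : cset n) (g : {mpoly C[n]}) : Prop :=
  forall x, V x -> g.@[x] = 0.

Definition subset n (A B : cset n) : Prop := forall x, A x -> B x.

Definition zclosed n (Z : cset n) : Prop :=
  exists S : {mpoly C[n]} -> Prop,
    forall x, Z x <-> (forall g, S g -> g.@[x] = 0).

Definition irreducible n (Z : cset n) : Prop :=
  [/\ zclosed Z, exists x, Z x &
      forall A B : cset n, zclosed A -> zclosed B ->
        subset Z (fun x => A x \/ B x) -> subset Z A \/ subset Z B].

Definition irr_chain n (c : nat -> cset n) (d : nat) (Z : cset n) : Prop :=
  [/\ forall k, leq k d -> irreducible (c k),
      forall k, ltn k d -> subset (c k) (c k.+1) /\ ~ subset (c k.+1) (c k)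
    & forall x, c d x <-> Z x].

Definition irr_dim n (Z : cset n) (d : nat) : Prop :=
  (exists c, irr_chain c d Z) /\ ~ (exists c, irr_chain c d.+1 Z).

Definition component n (W Z : cset n) : Prop :=
  [/\ irreducible Z, subset Z W &
      forall Z', irreducible Z' -> subset Z Z' -> subset Z' W -> subset Z' Z].

Definition equidim n (W : cset n) (d : nat) : Prop :=
  forall Z, component W Z -> irr_dim Z d.

Definition nonempty n (W : cset n) : Prop := exists x, W x.

Definition jacobian n m (G : 'I_m -> {mpoly C[n]}) (x : point n) : 'M[C]_(m, n) :=
  \matrix_(r < m, c < n) (mderiv c (G r)).@[x].

(* V is smooth, of dimension d at each of its points: the Zariski tangent
   space T_x V = { v | dg(x) v = 0 for all g in I(V) } has dimension d,
   i.e. the differentials at x of the polynomials of I(V) span a space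
   of dimension n - d. *)
Definition smooth_of_dim n (V : cset n) (d : nat) : Prop :=
  forall x, V x ->
    (exists G : 'I_(n - d) -> {mpoly C[n]},
        (forall r, vanishes_on V (G r)) /\ \rank (jacobian G x) = subn n d) /\
    (forall m (G : 'I_m -> {mpoly C[n]}),
        (forall r, vanishes_on V (G r)) -> leq (\rank (jacobian G x)) (n - d)).

Lemma shift_ord_proof n i (j : 'I_(n - i)) : (ltn (addn i j) n).
Proof. by have := ltn_ord j; rewrite ltn_subRL. Qed.

(* the column index j (0-based, j < n - i) of jac(F,i) corresponds to the
   variable X_{i+1+j} (1-based), i.e. the 0-based variable i + j *)
Definition shift_ord n i (j : 'I_(n - i)) : 'I_n := Ordinal (shift_ord_proof j).

Definition jacFi n p (F : 'I_p -> {mpoly C[n]}) (i : nat) (x : point n)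
  : 'M[C]_(p, n - i) :=
  \matrix_(k < p, j < n - i) (mderiv (shift_ord j) (F k)).@[x].

Definition W n p (F : 'I_p -> {mpoly C[n]}) (i : nat) : cset n :=
  fun x => zeros F x /\ ltn (\rank (jacFi F i x)) p.

(* Polynomials in the variables (X_1..X_n, L_1..L_p), i.e. C[n + p]    *)
Definition Xv n p (j : 'I_n) : {mpoly C[n + p]} := 'X_(lshift p j).
Definition Lv n p (k : 'I_p) : {mpoly C[n + p]} := 'X_(rshift n k).

Definition liftX n p (f : {mpoly C[n]}) : {mpoly C[n + p]} :=
  f \mPo [tuple Xv p j | j < n].

Definition sysF n p (F : 'I_p -> {mpoly C[n]}) : seq {mpoly C[n + p]} :=
  [seq liftX p (F k) | k <- enum 'I_p].

Definition sysLag n p (F : 'I_p -> {mpoly C[n]}) (i : nat) : seq {mpoly C[n + p]} :=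
  [seq \sum_(k < p) Lv n k * liftX p (mderiv (shift_ord j) (F k))
  | j <- enum 'I_(n - i)].

Definition sysSigma n p (i : nat) (sigma : (i.-1).-tuple C) : seq {mpoly C[n + p]} :=
  [seq Xv p j - (nth 0 sigma (nat_of_ord j))%:MP | j : 'I_n <- [seq j0 <- enum 'I_n | ltn (nat_of_ord j0) i.-1]].

Definition affL n p (u : 'I_p -> C) : {mpoly C[n + p]} :=
  \sum_(k < p) (u k)%:MP * Lv n k - 1.

Definition jacXL N (s : seq {mpoly C[N]}) (z : point N) : 'M[C]_(size s, N) :=
  \matrix_(r < size s, c < N) (mderiv c (s`_r)).@[z].

Definition common_zero N (s : seq {mpoly C[N]}) (z : point N) : Prop :=
  forall g, g \in s -> g.@[z] = 0.

Definition L_nonzero n p (z : point (n + p)) : Prop :=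
  exists k : 'I_p, z (rshift n k) != 0.

Definition H1 n p (F : 'I_p -> {mpoly C[n]}) (i : nat) : Prop :=
  ~ nonempty (W F i) \/ equidim (W F i) i.-1.

Definition H2 n p (F : 'I_p -> {mpoly C[n]}) (i : nat) : Prop :=
  forall z : point (n + p), L_nonzero z ->
    common_zero (sysF F ++ sysLag F i) z ->
    \rank (jacXL (sysF F ++ sysLag F i) z) = subn (addn n p) i.

Definition in_first_vars n (k : nat) (g : {mpoly C[n]}) : Prop :=
  forall m, m \in msupp g -> forall j : 'I_n, leq k j -> m j = 0%nat.

(* C[X_1..X_{i-1}] -> C[X]/I(W) is injective and integral *)
Definition H3 n p (F : 'I_p -> {mpoly C[n]}) (i : nat) : Prop :=
  ~ nonempty (W F i) \/
  ((forall g, in_first_vars i.-1 g -> vanishes_on (W F i) g -> g = 0) /\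
   (forall g : {mpoly C[n]}, exists (d : nat) (a : 'I_d -> {mpoly C[n]}),
       (forall k, in_first_vars i.-1 (a k)) /\
       vanishes_on (W F i) (g ^+ d + \sum_(k < d) a k * g ^+ k))).

Definition H' n p (F : 'I_p -> {mpoly C[n]}) (i : nat) (sigma : (i.-1).-tuple C)
  : Prop :=
  forall z : point (n + p), L_nonzero z ->
    common_zero (@sysSigma n p i sigma ++ sysF F ++ sysLag F i) z ->
    \rank (jacXL (@sysSigma n p i sigma ++ sysF F ++ sysLag F i) z) = subn (addn n p) 1.

(* Main.v *)
Require Import Defs.
From mathcomp Require Import all_boot all_algebra.
Import GRing.Theory.
Local Open Scope ring_scope.
Section D.
Variables (n p : nat) (z : point (n + p)).
Definition vv (c : 'I_(n + p)) : C := if (n <= c)%N then z c else 0.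
Definition Dz (g : {mpoly C[n + p]}) : C := \sum_(c < n + p) vv c * (mderiv c g).@[z].

Lemma Dz0 : Dz 0 = 0.
Proof. by rewrite /Dz big1 // => c _; rewrite mderiv0 meval0 mulr0. Qed.
Lemma DzD g h : Dz (g + h) = Dz g + Dz h.
Proof. by rewrite /Dz -big_split; apply: eq_bigr => c _; rewrite mderivD mevalD mulrDr. Qed.
Lemma DzN g : Dz (- g) = - Dz g.
Proof. by rewrite /Dz -sumrN; apply: eq_bigr => c _; rewrite mderivN mevalN mulrN. Qed.
Lemma DzB g h : Dz (g - h) = Dz g - Dz h.
Proof. by rewrite DzD DzN. Qed.
Lemma Dzsum (I : Type) (r : seq I) (P : pred I) (G : I -> {mpoly C[n + p]}) :
  Dz (\sum_(k <- r | P k) G k) = \sum_(k <- r | P k) Dz (G k).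
Proof. exact: (big_morph Dz DzD Dz0). Qed.
Lemma DzM g h : Dz (g * h) = Dz g * h.@[z] + g.@[z] * Dz h.
Proof.
rewrite /Dz mulr_suml mulr_sumr -big_split; apply: eq_bigr => c _.
by rewrite mderivM mevalD !mevalM mulrDr !mulrA [_ * g.@[z]]mulrC.
Qed.
Lemma DzC c : Dz c%:MP = 0.
Proof. by rewrite /Dz big1 // => i _; rewrite mderivC meval0 mulr0. Qed.
Lemma DzX j : Dz 'X_j = vv j.
Proof.
rewrite /Dz (eq_bigr (fun c => if c == j then vv j else 0)).
  by rewrite -big_mkcond big_pred1_eq.
move=> c _; rewrite mderivX mnm1E eq_sym; case: eqP => [->|_].
  have -> : (U_(j) - U_(j) = 0)%MM by apply/mnmP => i; rewrite mnmBE subnn mnm0E.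
  by rewrite mpolyX0 scale1r meval1 mulr1.
by rewrite scale0r meval0 mulr0.
Qed.
Lemma DzXv (j : 'I_n) : Dz (Xv p j) = 0.
Proof. by rewrite DzX /vv /= leqNgt ltn_ord. Qed.
Lemma DzLv (k : 'I_p) : Dz (Lv n k) = z (rshift n k).
Proof. by rewrite DzX /vv /= leq_addr. Qed.
Lemma Dzlift f : Dz (liftX p f) = 0.
Proof.
rewrite /liftX comp_mpolyE Dzsum big1 // => m _.
rewrite -mul_mpolyC DzM DzC mul0r add0r.
have -> : Dz (\prod_(i < n) tnth [tuple Xv p j | j < n] i ^+ m i) = 0; last by rewrite mulr0.
apply: (big_ind (fun q => Dz q = 0)).
- by rewrite -mpolyC1 DzC.
- by move=> x y Hx Hy; rewrite DzM Hx Hy mul0r mulr0 addr0.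
move=> i _; elim: (m i) => [|e IH]; first by rewrite expr0 -mpolyC1 DzC.
by rewrite exprS DzM IH tnth_mktuple DzXv mul0r mulr0 addr0.
Qed.
End D.
Arguments Dz {n p} z g.
Arguments vv {n p} z c.

Lemma rank_ext (F : fieldType) m k N (A : 'M[F]_(m,N)) (B : 'M[F]_(k,N)) (a : 'rV_N) (w : 'cV_N) :
 (B <= A)%MS -> (a <= A)%MS -> \rank B = N.-1 -> B *m w = 0 -> a *m w != 0 -> \rank A = N.
Proof.
move=> BA aA rB Bw aw.
have a0 : a != 0 by apply: contraNneq aw => ->; rewrite mul0mx.
have N0 : (0 < N)%N by case: N a w a0 {A B BA aA rB Bw aw} => // a w; rewrite thinmx0 eqxx.
have cap0 : (B :&: a)%MS = 0.
  apply/eqP/rowV0P => x; rewrite sub_capmx => /andP[/submxP[D ->] /sub_rVP[c xa]].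
  have : c *: (a *m w) = 0 by rewrite scalemxAl -xa -mulmxA Bw mulmx0.
  by move/eqP; rewrite scaler_eq0 (negbTE aw) orbF => /eqP c0; rewrite xa c0 scale0r.
apply/eqP; rewrite eqn_leq rank_leq_col /=.
have := mxrankS (_ : (B + a <= A)%MS); rewrite mxrank_disjoint_sum // rB rank_rV a0.
rewrite addn1 prednK //; apply; by rewrite addsmx_sub BA aA.
Qed.

Lemma affL_eval n p (u : 'I_p -> C) (z : point (n + p)) :
  (affL n u).@[z] = \sum_(k < p) u k * z (rshift n k) - 1.
Proof.
rewrite /affL mevalB meval1 (big_morph _ (mevalD z) (meval0 z)); congr (_ - _).
by apply: eq_bigr => k _; rewrite mevalM mevalC /Lv mevalXU.
Qed.

Lemma Dz_affL n p (u : 'I_p -> C) (z : point (n + p)) :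
  Dz z (affL n u) = \sum_(k < p) u k * z (rshift n k).
Proof.
rewrite /affL DzB -mpolyC1 DzC subr0 Dzsum; apply: eq_bigr => k _.
by rewrite DzM DzC DzLv mul0r add0r mevalC.
Qed.

Lemma Dz_s1 n p (F : 'I_p -> {mpoly C[n]}) i (sigma : (i.-1).-tuple C) (z : point (n + p)) h :
  common_zero (sysLag F i) z ->
  h \in @sysSigma n p i sigma ++ sysF F ++ sysLag F i -> Dz z h = 0.
Proof.
move=> cz; rewrite !mem_cat => /or3P[].
- by case/mapP => j _ ->; rewrite DzB DzXv DzC subr0.
- by case/mapP => k _ ->; rewrite Dzlift.
move=> hin; have := cz _ hin; case/mapP: hin => j _ -> <-.
rewrite Dzsum (big_morph _ (mevalD z) (meval0 z)); apply: eq_bigr => k _.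
by rewrite DzM DzLv Dzlift mulr0 addr0 mevalM /Lv mevalXU.
Qed.

Theorem corollary3 (n p : nat) (F : 'I_p -> {mpoly C[n]}) (i : nat)
  (sigma : (i.-1).-tuple C) :
  leq p n ->
  radical_ideal F ->
  equidim (zeros F) (n - p) ->
  smooth_of_dim (zeros F) (n - p) ->
  leq 1 i && leq i (n - p + 1) ->
  H1 F i -> H2 F i -> H3 F i -> H' F sigma ->
  forall u : 'I_p -> C,
  forall z : point (n + p),
    common_zero (@sysSigma n p i sigma ++ sysF F ++ sysLag F i ++ [:: affL n u]) z ->
    \rank (jacXL (@sysSigma n p i sigma ++ sysF F ++ sysLag F i ++ [:: affL n u]) z)
      = addn n p.
Proof.
move=> _ _ _ _ _ _ _ _ HH u z.
set s1 := @sysSigma n p i sigma ++ sysF F ++ sysLag F i.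
have -> : @sysSigma n p i sigma ++ sysF F ++ sysLag F i ++ [:: affL n u] = s1 ++ [:: affL n u].
  by rewrite /s1 !catA.
move=> cz.
have cz1 : common_zero s1 z by move=> h hin; apply: cz; rewrite mem_cat hin.
have czg : (affL n u).@[z] = 0 by apply: cz; rewrite mem_cat mem_seq1 eqxx orbT.
have czL : common_zero (sysLag F i) z by move=> h hin; apply: cz1; rewrite /s1 !mem_cat hin !orbT.
have S1 : \sum_(k < p) u k * z (rshift n k) = 1.
  by apply/eqP; rewrite -subr_eq0 -affL_eval czg.
have Lnz : L_nonzero z.
  case: (boolP [exists k, z (rshift n k) != 0]) => [/existsP//|/existsPn H0].
  move: S1; rewrite big1 => [/eqP|k _]; first by rewrite eq_sym oner_eq0.
  by move: (H0 k); rewrite negbK => /eqP ->; rewrite mulr0.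
have rB := HH z Lnz cz1.
have le1 : (size s1 <= size (s1 ++ [:: affL n u]))%N by rewrite size_cat leq_addr.
have lt1 : (size s1 < size (s1 ++ [:: affL n u]))%N by rewrite size_cat addn1.
apply: (@rank_ext _ _ _ _ _ (jacXL s1 z) (row (Ordinal lt1) (jacXL (s1 ++ [:: affL n u]) z))
   (\col_c vv z c)).
- apply/row_subP => r.
  have -> : row r (jacXL s1 z) = row (widen_ord le1 r) (jacXL (s1 ++ [:: affL n u]) z).
    by apply/rowP => c; rewrite !mxE /= nth_cat ltn_ord.
  exact: row_sub.
- exact: row_sub.
- by rewrite rB subn1.
- apply/matrixP => r c0; rewrite !mxE.
  apply: (etrans _ (@Dz_s1 n p F i sigma z _ czL (mem_nth 0 (ltn_ord r)))).
  by rewrite /Dz; apply: eq_bigr => c _; rewrite !mxE mulrC.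
- apply/negP => /eqP/matrixP/(_ 0 0); rewrite !mxE.
  have -> : \sum_(c < n + p) row (Ordinal lt1) (jacXL (s1 ++ [:: affL n u]) z) 0 c * (\col_c0 vv z c0) c 0
      = Dz z (affL n u).
    by rewrite /Dz; apply: eq_bigr => c _; rewrite !mxE /= nth_cat ltnn subnn /= mulrC.
  by rewrite Dz_affL S1 => /eqP; rewrite oner_eq0.
Qed.
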